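(* Let $d\ge 1$ be an integer and for each subset $J\subseteq[d]$ let $Q_J\in\mathbb{R}^{d-1}$ be a point. Then there is an index $i\in[d]$ such that \[ \operatorname{conv}\{Q_J: J\subseteq[d],\ i\in J\}\cap\operatorname{conv}\{Q_J: J\subseteq[d],\ i\notin J\}\neq\emptyset. \]
   Context: $[d]=\{1,\dots,d\}$. *)

(* Defs.v *)
From HB Require Import structures.
From mathcomp Require Import all_boot all_order all_algebra.
From mathcomp Require Import reals.
Set Implicit Arguments. Unset Strict Implicit. Unset Printing Implicit Defensive.
Import Order.TTheory GRing.Theory Num.Theory.
Local Open Scope ring_scope.

Definition in_conv_hull (R : numDomainType) (I : finType) (n : nat)
    (Q : I -> 'rV[R]_n) (A : {set I}) (x : 'rV[R]_n) : Prop :=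
  exists lam : I -> R,
    [/\ forall i, 0 <= lam i,
        forall i, i \notin A -> lam i = 0,
        \sum_i lam i = 1
      & x = \sum_i lam i *: Q i].

(* Main.v *)
Require Import Defs.
From HB Require Import structures.
From mathcomp Require Import all_boot all_order all_algebra.
From mathcomp Require Import reals boolp lra.
Set Implicit Arguments. Unset Strict Implicit. Unset Printing Implicit Defensive.
Import Order.TTheory GRing.Theory Num.Theory.
Local Open Scope ring_scope.

Section Gordan.
Variable R : realFieldType.

Definition gdot (m : nat) (w v : nat -> R) := \sum_(k < m) w k * v k.

Lemma interp (I : finType) (P N : pred I) (L U : I -> R) :
  (forall p n, P p -> N n -> L p < U n) ->
  exists t, (forall p, P p -> L p < t) /\ (forall n, N n -> t < U n).
Proof.
move=> H.
case: (pickP P) => [p0 Pp0|P0]; case: (pickP N) => [n0 Nn0|N0].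
- case: (arg_maxP L Pp0) => p Pp Hp; case: (arg_minP U Nn0) => n Nn Hn.
  have [h1 h2] := midf_lt (H _ _ Pp Nn).
  exists ((L p + U n) / 2); split => [q Pq|q Nq].
  + exact: le_lt_trans (Hp _ Pq) h1.
  + exact: lt_le_trans h2 (Hn _ Nq).
- case: (arg_maxP L Pp0) => p Pp Hp.
  exists (L p + 1); split => [q Pq|q]; last by rewrite N0.
  by apply: le_lt_trans (Hp _ Pq) _; rewrite ltrDl ltr01.
- case: (arg_minP U Nn0) => n Nn Hn.
  exists (U n - 1); split => [q|q Nq]; first by rewrite P0.
  by apply: lt_le_trans (Hn _ Nq); rewrite gtrDl oppr_lt0 ltr01.
- by exists 0; split => q; rewrite ?P0 ?N0.
Qed.

Lemma sum_pick (I : finType) (j : I) (F : I -> R) :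
  \sum_i (i == j)%:R * F i = F j.
Proof.
rewrite (bigD1 j) //= eqxx mul1r big1 ?addr0 // => i /negbTE ->.
by rewrite mul0r.
Qed.

Lemma gordan m : forall (I : finType) (A : pred I) (v : I -> nat -> R),
  (exists c : I -> R, [/\ forall i, 0 <= c i, forall i, ~~ A i -> c i = 0,
      exists i, c i != 0 &
      forall k, (k < m)%N -> \sum_i c i * v i k = 0])
  \/ (exists w : nat -> R, forall i, A i -> 0 < gdot m w (v i)).
Proof.
elim: m => [|m IH] I A v.
  case: (pickP A) => [i0 Ai0|A0].
    left; exists (fun j => (j == i0)%:R); split => //=.
    - by move=> j /=; case: eqP => // ->; rewrite Ai0.
    - by exists i0; rewrite eqxx oner_neq0.
  by right; exists (fun _ => 0) => i; rewrite A0.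
pose a i := v i m.
pose P i := A i && (0 < a i).
pose N i := A i && (a i < 0).
pose Z i := A i && (a i == 0).
pose A' := fun x : I * I => ((x.1 == x.2) && Z x.1) || (P x.1 && N x.2).
pose coef := fun (x : I * I) i => if x.1 == x.2 then (i == x.1)%:R
   else (i == x.1)%:R * (- a x.2) + (i == x.2)%:R * a x.1.
have coefE : forall x (g : I -> R), \sum_i coef x i * g i =
   if x.1 == x.2 then g x.1 else - a x.2 * g x.1 + a x.1 * g x.2.
  move=> x g; rewrite /coef; case: ifP => _; first exact: sum_pick.
  under eq_bigr => i _ do rewrite mulrDl -!mulrA.
  by rewrite big_split /= !(sum_pick x.1 (fun i => - a x.2 * g i))
    !(sum_pick x.2 (fun i => a x.1 * g i)).
have PNneq : forall x, P x.1 -> N x.2 -> (x.1 == x.2) = false.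
  move=> x /andP[_ h1] /andP[_ h2]; apply/negbTE; apply/eqP => e.
  by move: h1; rewrite e => /(lt_trans h2); rewrite ltxx.
pose u := fun x l => \sum_i coef x i * v i l.
case: (IH _ A' u) => [[c' [c'ge0 c'out [x0 c'x0] c'ker]]|[w' Hw']].
  have coef_ge0 : forall x i, A' x -> 0 <= coef x i.
    move=> x i /orP[/andP[/eqP e _]|/andP[Pj Nk]].
      by rewrite /coef e eqxx ler0n.
    rewrite /coef PNneq //; apply: addr_ge0; apply: mulr_ge0; rewrite ?ler0n //.
      by move: Nk => /andP[_]; rewrite oppr_ge0 => /ltW.
    by move: Pj => /andP[_ /ltW].
  have A'c : forall x, c' x != 0 -> A' x.
    by move=> x; apply: contraR => /c'out ->; rewrite eqxx.
  left; exists (fun i => \sum_x c' x * coef x i); split.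
  - move=> i; apply: sumr_ge0 => x _.
    case: (boolP (A' x)) => Ax; last by rewrite c'out // mul0r.
    by apply: mulr_ge0; [exact: c'ge0 | exact: coef_ge0].
  - move=> i Ai; apply: big1 => x _.
    case: (boolP (A' x)) => Ax; last by rewrite c'out // mul0r.
    have Ax1 : A x.1 by move: Ax; rewrite /A' /Z /P => /orP[/andP[_ /andP[]]|/andP[/andP[]]].
    have Ax2 : A x.2 by move: Ax; rewrite /A' /Z /N => /orP[/andP[/eqP <- /andP[]]|/andP[_ /andP[]]].
    rewrite /coef.
    have -> : (i == x.1) = false by apply/negbTE; apply: contraNneq Ai => ->.
    have -> : (i == x.2) = false by apply/negbTE; apply: contraNneq Ai => ->.
    by case: ifP => _; rewrite ?mul0r ?add0r ?mulr0.
  - exists x0.1; rewrite (bigD1 x0) //=; apply: lt0r_neq0.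
    have Ax0 := A'c _ c'x0.
    apply: ltr_pwDl; last by apply: sumr_ge0 => x _;
      case: (boolP (A' x)) => Ax; [apply: mulr_ge0; [exact: c'ge0 | exact: coef_ge0] | rewrite c'out // mul0r].
    apply: mulr_gt0; first by rewrite lt0r c'x0 c'ge0.
    rewrite /coef eqxx; case: ifP => e; first by rewrite ltr01.
    rewrite mul1r e mul0r addr0 oppr_gt0.
    by case/orP: Ax0 => /andP[]; [rewrite e | move=> _ /andP[]].
  - move=> k lek.
    have -> : \sum_i (\sum_x c' x * coef x i) * v i k = \sum_x c' x * u x k.
      under eq_bigr => i _ do rewrite mulr_suml.
      rewrite exchange_big /=; apply: eq_bigr => x _.
      by rewrite /u mulr_sumr; apply: eq_bigr => i _; rewrite mulrA.
    move: lek; rewrite ltnS leq_eqVlt => /orP[/eqP ->|]; last exact: c'ker.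
    apply: big1 => x _.
    case: (boolP (A' x)) => Ax; last by rewrite c'out // mul0r.
    rewrite /u coefE; case: ifP => e.
      move: Ax; rewrite /A' => /orP[/andP[_ /andP[_ /eqP ha]]|/andP[Pj Nk]].
        by move: ha; rewrite /a => ->; rewrite mulr0.
      by rewrite PNneq in e.
    by rewrite /a [v x.1 m * _]mulrC mulNr addNr mulr0.
pose D i := gdot m w' (v i).
have HD : forall x, A' x -> 0 < if x.1 == x.2 then D x.1 else - a x.2 * D x.1 + a x.1 * D x.2.
  move=> x /Hw'; rewrite -coefE /gdot /u.
  under eq_bigr => l _ do rewrite mulr_sumr.
  rewrite exchange_big /=; congr (0 < _); apply: eq_bigr => i _.
  by rewrite mulr_sumr; apply: eq_bigr => l _; rewrite mulrCA.
have [t [Ht1 Ht2]] : exists t, (forall p, P p -> - D p / a p < t) /\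
    (forall n, N n -> t < D n / (- a n)).
  apply: interp => p n Pp Nn.
  have pn : (p == n) = false := PNneq (p, n) Pp Nn.
  have := HD (p, n); rewrite /A' /= Pp Nn orbT pn => /(_ isT) H.
  move: Pp Nn => /andP[_ hp] /andP[_ hn].
  rewrite ltr_pdivlMr ?oppr_gt0 // mulrAC ltr_pdivrMr //.
  by rewrite mulrN mulNr opprK mulrC [D n * _]mulrC; lra.
right; exists (fun l => if l == m then t else w' l) => i Ai.
rewrite /gdot big_ord_recr /= eqxx.
have -> : \sum_(k < m) (if widen_ord (leqnSn m) k == m :> nat then t else w' (widen_ord (leqnSn m) k))
    * v i (widen_ord (leqnSn m) k) = D i.
  by apply: eq_bigr => k _ /=; rewrite ltn_eqF.
have := HD (i, i); rewrite /A' /= eqxx /= => HDi.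
case: (ltrgt0P (a i)) => ha.
- have := Ht1 i; rewrite /P Ai ha => /(_ isT).
  by rewrite ltr_pdivrMr // -/(a i); lra.
- have := Ht2 i; rewrite /N Ai ha => /(_ isT).
  by rewrite ltr_pdivlMr ?oppr_gt0 // -/(a i); lra.
- by rewrite -/(a i) ha mulr0 addr0; apply: HDi; rewrite /Z Ai ha eqxx.
Qed.

End Gordan.
Lemma ker_nontriv (F : fieldType) (n : nat) (M : 'M[F]_(n.+1, n)) :
  exists u : 'rV[F]_n.+1, u != 0 /\ u *m M = 0.
Proof.
have : kermx M != 0.
  rewrite kermx_eq0 /row_free; apply/negP => /eqP h.
  by have := rank_leq_col M; rewrite h ltnn.
case/matrix0Pn => i [j Hij].
exists (row i (kermx M)); split.
  by apply/rV0Pn; exists j; rewrite mxE.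
by rewrite -row_mul mulmx_ker; apply/rowP => k; rewrite !mxE.
Qed.

Definition getc (R : realType) n (r : 'rV[R]_n) (l : nat) : R :=
  if insub l is Some k then r 0 k else 0.

Lemma getcE (R : realType) n (r : 'rV[R]_n) (k : 'I_n) : getc r k = r 0 k.
Proof. by rewrite /getc valK. Qed.

Theorem lemma6 (R : realType) (d : nat) (hd : (1 <= d)%N)
    (Q : {set 'I_d} -> 'rV[R]_(d.-1)) :
  exists i : 'I_d, exists x : 'rV[R]_(d.-1),
    in_conv_hull Q [set J : {set 'I_d} | i \in J] x /\
    in_conv_hull Q [set J : {set 'I_d} | i \notin J] x.
Proof.
case: d hd Q => [//|d] _ Q /=.
pose s (i : 'I_d.+1) (J : {set 'I_d.+1}) : R := if i \in J then 1 else -1.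
pose v i J l := s i J * (if l is l'.+1 then getc (Q J) l' else 1).
have dotE : forall i J w, gdot d.+1 w (v i J) =
    s i J * (w 0%N + \sum_(k < d) w k.+1 * Q J 0 k).
  move=> i J w; rewrite /gdot big_ord_recl /v /= mulr1 mulrDr mulr_sumr mulrC.
  congr (_ + _); apply: eq_bigr => k _.
  by rewrite add0n getcE mulrCA.
have H := fun i => gordan d.+1 predT (v i).
case: (pselect (exists i, exists c : {set 'I_d.+1} -> R,
   [/\ forall J, 0 <= c J, forall J, ~~ predT J -> c J = 0,
      exists J, c J != 0 &
      forall k, (k < d.+1)%N -> \sum_J c J * v i J k = 0])) => [[i [c [c0 _ [J0 cJ0] ck]]]|nL].
  pose S := \sum_(J : {set 'I_d.+1} | i \in J) c J.
  pose S' := \sum_(J : {set 'I_d.+1} | i \notin J) c J.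
  have spl : forall F : {set 'I_d.+1} -> R,
      \sum_J F J = \sum_(J : {set 'I_d.+1} | i \in J) F J + \sum_(J : {set 'I_d.+1} | i \notin J) F J.
    by move=> F; rewrite (bigID (fun J : {set 'I_d.+1} => i \in J)).
  have eS : S = S'.
    have := ck 0%N isT; rewrite spl.
    have -> : \sum_(J : {set 'I_d.+1} | i \in J) c J * v i J 0%N = S.
      by apply: eq_bigr => J hJ; rewrite /v /s hJ !mulr1.
    have -> : \sum_(J : {set 'I_d.+1} | i \notin J) c J * v i J 0%N = - S'.
      by rewrite /S' -sumrN; apply: eq_bigr => J /negbTE hJ; rewrite /v /s hJ mulr1 mulrN1.
    by move/eqP; rewrite subr_eq0 => /eqP.
  have Spos : 0 < S.
    have : 0 < \sum_J c J.
      rewrite (bigD1 J0) //=; apply: ltr_pwDl; first by rewrite lt0r cJ0 c0.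
      by apply: sumr_ge0 => J _; exact: c0.
    rewrite spl -/S -/S' -eS; lra.
  have hk : forall k : 'I_d, \sum_J c J * s i J * Q J 0 k = 0.
    move=> k; have := ck k.+1 (ltn_ord k); rewrite /v => h; apply: etrans h.
    by apply: eq_bigr => J _; rewrite getcE mulrA.
  pose lam (J : {set 'I_d.+1}) := if i \in J then c J / S else 0.
  pose mu (J : {set 'I_d.+1}) := if i \notin J then c J / S else 0.
  exists i, (\sum_J lam J *: Q J); split.
    exists lam; split => //.
    - by move=> J; rewrite /lam; case: ifP => _ //; apply: divr_ge0 => //; apply: ltW.
    - by move=> J; rewrite inE /lam => /negbTE ->.
    - by rewrite /lam -big_mkcond /= -mulr_suml divff // gt_eqF.
  exists mu; split => //.
  - by move=> J; rewrite /mu; case: ifP => _ //; apply: divr_ge0 => //; apply: ltW.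
  - by move=> J; rewrite inE /mu => /negbTE ->.
  - by rewrite /mu -big_mkcond /= -mulr_suml; change (S' / S = 1); rewrite -eS divff // gt_eqF.
  apply/rowP => k; rewrite !summxE; apply/eqP; rewrite -subr_eq0 -sumrB.
  rewrite (eq_bigr (fun J => c J * s i J * Q J 0 k / S)).
    by rewrite -mulr_suml hk mul0r.
  move=> J _; rewrite !mxE /lam /mu /s.
  case: (i \in J) => /=; rewrite ?mul0r ?subr0 ?sub0r ?mulr1 ?mulrN1; lra.
have HW : forall i, exists w : nat -> R, forall J, predT J -> 0 < gdot d.+1 w (v i J).
  move=> i; case: (H i) => // hl; case: nL; by exists i.
have [W HWi] := choice HW.
pose Wv i J := W i 0%N + \sum_(k < d) W i k.+1 * Q J 0 k.
have Hs : forall i J, 0 < s i J * Wv i J by move=> i J; rewrite -dotE; exact: HWi.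
have [u [u0 uM]] := ker_nontriv (\matrix_(i < d.+1, k < d) W i k.+1).
pose t (u : 'rV[R]_d.+1) := \sum_i u 0 i * W i 0%N.
have key : forall u : 'rV[R]_d.+1, u != 0 -> u *m (\matrix_(i < d.+1, k < d) W i k.+1) = 0 ->
   0 < t u.
  move=> u' u'0 u'M.
  pose Jp := [set i | 0 < u' 0 i].
  have -> : t u' = \sum_i u' 0 i * Wv i Jp.
    rewrite /t /Wv.
    under [RHS]eq_bigr => i _ do rewrite mulrDr.
    rewrite big_split /= -[LHS]addr0; congr (_ + _).
    under eq_bigr => i _ do rewrite mulr_sumr.
    rewrite exchange_big /= big1 // => k _.
    have e : \sum_i u' 0 i * W i k.+1 = 0.
      have := congr1 (fun M : 'M[R]_(1,d) => M 0 k) u'M; rewrite !mxE => h.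
      apply: etrans h.
      by apply: eq_bigr => i _; rewrite mxE.
    transitivity ((\sum_i u' 0 i * W i k.+1) * Q Jp 0 k); last by rewrite e mul0r.
    rewrite mulr_suml.
    by apply: eq_bigr => i _; rewrite mulrA.
  have tge0 : forall i, 0 <= u' 0 i * Wv i Jp /\ (u' 0 i != 0 -> 0 < u' 0 i * Wv i Jp).
    move=> i; have := Hs i Jp; rewrite /s inE.
    case: (ltrgt0P (u' 0 i)) => hu.
    - by rewrite mul1r => hw; split => [|_]; [apply: ltW|]; apply: mulr_gt0.
    - rewrite mulN1r oppr_gt0 => hw.
      have p : 0 < u' 0 i * Wv i Jp by rewrite nmulr_rgt0.
      by split => [|_] //; apply: ltW.
    - by move=> _; rewrite hu mul0r lexx.
  case/rV0Pn: u'0 => j hj.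
  rewrite (bigD1 j) //=; apply: ltr_pwDl; first exact: (tge0 j).2.
  by apply: sumr_ge0 => i _; exact: (tge0 i).1.
have h1 := key u u0 uM.
have h2 : 0 < t (- u) by apply: key; [rewrite oppr_eq0 | rewrite mulNmx uM oppr0].
have : t (- u) = - t u by rewrite /t -sumrN; apply: eq_bigr => i _; rewrite mxE mulNr.
lra.
Qed.
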